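(* Let $n\geq1$ and $k\in\{1,\ldots,n\}$, and let $\eta_k\in\Omega$ be the sequence constructed below. Then $v_{n,\eta_k}=(0,k)$ or $v_{n,\eta_k}=(n-k+1,0)$.
   Context: $\Omega$ is the set of sequences $\eta=(z,d_0,\ldots,d_r)$ with $z\in\{0,1\}$, $d_0=0$, $d_i\geq1$ ($1\leq i\leq r$), $\sum d_i=n$. For $j\in\{1,\ldots,n\}$ let $t$ be unique with $\sum_{i=0}^{t-1}d_i<j\leq\sum_{i=0}^td_i$, $c=j-\sum_{i=0}^{t-1}d_i$; $v_{j,\eta}=(\sum_{i\text{ odd},i<t}d_i+c,0)$ if $z=1,t$ odd; $(0,\sum_{i\text{ even},i<t}d_i+c)$ if $z=1,t$ even; $(0,\sum_{i\text{ odd},i<t}d_i+c)$ if $z=0,t$ odd; $(\sum_{i\text{ even},i<t}d_i+c,0)$ if $z=0,t$ even. Construction of $\eta_k$: let $f_k(v)=kv_1+(1-k)v_2$ for $v\in\mathbb N^2$ (so $f_k((1,0))=k$, $f_k((n,n+1))=n+1-k$). Put $z_k=1$ if $k\leq n+1-k$ and $z_k=0$ otherwise, and $d_{k,0}=0$. Iteratively for $l\geq1$, with $O_l=\sum_{j\text{ odd},1\leq j\leq l-1}d_{k,j}$ and $E_l=\sum_{j\text{ even},0\leq j\leq l-1}d_{k,j}$, define $t_l=\max\{m\in\mathbb N: mk\leq(E_l+1)(n+1-k)\}$ if $z_k=1,l$ odd; $t_l=\max\{m: m(n+1-k)\leq(O_l+1)k\}$ if $z_k=1,l$ even; $t_l=\max\{m:m(n+1-k)\leq(E_l+1)k\}$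 if $z_k=0,l$ odd; $t_l=\max\{m:mk\leq(O_l+1)(n+1-k)\}$ if $z_k=0,l$ even; $s_1=0$, $s_l=O_l$ for odd $l>1$, $s_l=E_l$ for even $l$; and $d_{k,l}=\min\{n-\sum_{j=0}^{l-1}d_{k,j},\,t_l-s_l\}$. The process stops at the first $r$ with $\sum_{j=1}^rd_{k,j}=n$, and $\eta_k=(z_k,d_{k,0},\ldots,d_{k,r})$ (it lies in $\Omega$). *)

(* Defs.v *)
From mathcomp Require Import all_boot.
Set Implicit Arguments. Unset Strict Implicit. Unset Printing Implicit Defensive.

(* Sequences eta = (z, d_0, ..., d_r) are represented by a boolean z
   (true <-> z = 1) and the list ds = [:: d_0; ...; d_r]. *)

Definition in_Omega (n : nat) (z : bool) (ds : seq nat) : Prop :=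
  exists r, size ds = r.+1 /\ nth 0 ds 0 = 0 /\
    (forall i, 1 <= i <= r -> 1 <= nth 0 ds i) /\ sumn ds = n.

(* The vector v_{j,eta}. t is the (unique, for eta in Omega) index with
   sum_{i<t} d_i < j <= sum_{i<=t} d_i; we take the least t with
   j <= sum_{i<=t} d_i. *)
Definition v_vec (z : bool) (ds : seq nat) (j : nat) : nat * nat :=
  let t := find (fun t => j <= \sum_(0 <= i < t.+1) nth 0 ds i) (iota 0 (size ds)) in
  let c := j - \sum_(0 <= i < t) nth 0 ds i in
  let So := \sum_(0 <= i < t | odd i) nth 0 ds i in
  let Se := \sum_(0 <= i < t | ~~ odd i) nth 0 ds i in
  if z then (if odd t then (So + c, 0) else (0, Se + c))
  else (if odd t then (0, So + c) else (Se + c, 0)).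

(* max {m in N : m * a <= b} for a > 0 is b %/ a. *)
Definition tmax (a b : nat) : nat := b %/ a.

Definition zk (n k : nat) : bool := k <= n.+1 - k.

(* Given ds = [:: d_{k,0}; ...; d_{k,l-1}] (size l >= 1), compute d_{k,l}. *)
Definition next_d (n k : nat) (ds : seq nat) : nat :=
  let l := size ds in
  let O := \sum_(1 <= j < l | odd j) nth 0 ds j in
  let E := \sum_(0 <= j < l | ~~ odd j) nth 0 ds j in
  let t := if zk n k then
             (if odd l then tmax k ((E + 1) * (n.+1 - k))
              else tmax (n.+1 - k) ((O + 1) * k))
           else
             (if odd l then tmax (n.+1 - k) ((E + 1) * k)
              else tmax k ((O + 1) * (n.+1 - k))) in
  let s := if l == 1 then 0 else if odd l then O else E in
  minn (n - sumn ds) (t - s).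

Fixpoint dlist (n k l : nat) : seq nat :=
  match l with
  | 0 => [:: 0]
  | l'.+1 => let ds := dlist n k l' in rcons ds (next_d n k ds)
  end.

Definition stops_at (n k r : nat) : Prop :=
  1 <= r /\ sumn (dlist n k r) = n /\
  (forall r', 1 <= r' < r -> sumn (dlist n k r') != n).

Definition eta_z (n k : nat) : bool := zk n k.
Definition eta_ds (n k r : nat) : seq nat := dlist n k r.

(* Main.v *)
Require Import Defs.
From mathcomp Require Import all_boot zify.
Set Implicit Arguments. Unset Strict Implicit.

Definition Od (ds : seq nat) := \sum_(1 <= j < size ds | odd j) nth 0 ds j.
Definition Ed (ds : seq nat) := \sum_(0 <= j < size ds | ~~ odd j) nth 0 ds j.

Lemma sum_rcons_gen (P : pred nat) m (ds : seq nat) d :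
  m <= size ds ->
  \sum_(m <= j < size (rcons ds d) | P j) nth 0 (rcons ds d) j =
  \sum_(m <= j < size ds | P j) nth 0 ds j + (if P (size ds) then d else 0).
Proof.
move=> hm; rewrite size_rcons big_mkcond big_nat_recr //= nth_rcons ltnn eqxx.
congr (_ + _); rewrite [RHS]big_mkcond; apply: eq_big_nat => i /andP[_ hi].
by rewrite nth_rcons hi.
Qed.

Lemma Od_rcons ds d : 0 < size ds ->
  Od (rcons ds d) = Od ds + (if odd (size ds) then d else 0).
Proof. by move=> h; rewrite /Od sum_rcons_gen. Qed.

Lemma Ed_rcons ds d :
  Ed (rcons ds d) = Ed ds + (if odd (size ds) then 0 else d).
Proof. by rewrite /Ed sum_rcons_gen //; case: odd. Qed.

Lemma size_dlist n k r : size (dlist n k r) = r.+1.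
Proof. by elim: r => //= r IH; rewrite size_rcons IH. Qed.

Lemma sum_dlist n k r : sumn (dlist n k r) = Od (dlist n k r) + Ed (dlist n k r).
Proof.
elim: r => [|r IH] /=; first by rewrite /Od /Ed /= big_geq // big_mkcond big_nat1.
rewrite sumn_rcons Od_rcons ?size_dlist // Ed_rcons IH size_dlist.
by case: odd; lia.
Qed.
Definition pp n k := if zk n k then n.+1 - k else k.
Definition qq n k := if zk n k then k else n.+1 - k.

Lemma pq_facts n k : 1 <= k <= n -> [/\ 1 <= qq n k, qq n k <= pp n k & pp n k + qq n k = n.+1].
Proof. move=> /andP[h1 h2]; rewrite /pp /qq /zk; case: (leqP k (n.+1 - k)) => h; split; lia. Qed.

Lemma next_d_pq n k ds :
  next_d n k ds = minn (n - sumn ds)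
    ((if odd (size ds) then ((Ed ds + 1) * pp n k) %/ qq n k
      else ((Od ds + 1) * qq n k) %/ pp n k) -
     (if size ds == 1 then 0 else if odd (size ds) then Od ds else Ed ds)).
Proof. by rewrite /next_d /pp /qq /tmax; case: zk; case: odd. Qed.

Definition BO p q O E := E < q /\ (O + 1) * q <= (E + 1) * p.
Definition BE p q O E := O < p /\ (E + 1) * p <= (O + 1) * q.

Lemma div_bounds m d : 0 < d -> m %/ d * d <= m /\ m < (m %/ d).+1 * d.
Proof. by move=> h; split; [apply: leq_trunc_div | apply: ltn_ceil]. Qed.

Lemma canc a b q : a * q < b * q -> a < b.
Proof. by move=> h; rewrite ltnNge; apply/negP => hb; move: h; rewrite ltnNge leq_mul2r hb orbT. Qed.

Lemma arith_step p q O E t : 1 <= q ->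
  BO p q O E -> t * q <= (E + 1) * p -> (E + 1) * p < t.+1 * q ->
  [/\ O < t, t + E <= p + q - 1 &
     (E = q - 1 /\ t = p) \/ BE p q t E].
Proof.
move=> hq [hE hO] h1 h2.
have hOt : O < t.
  have : (O + 1) * q < t.+1 * q by lia.
  move/canc; lia.
have htp : t <= p.
  have h3 : (E + 1) * p <= q * p := leq_mul (_ : E + 1 <= q) (leqnn p).
  have : t * q < p.+1 * q.
    rewrite mulSn [q * p]mulnC in h3 *; lia.
  move/canc; lia.
have [he|hne] := eqVneq E (q - 1).
  have -> : t = p.
    apply/eqP; rewrite eqn_leq htp /=.
    have : p * q < t.+1 * q by move: h2; rewrite he (_ : q - 1 + 1 = q) 1?mulnC; lia.
    by move/canc.
  split; try lia; by left.
have htp' : t < p.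
  have h3 : (E + 1) * p <= (q - 1) * p := leq_mul (_ : E + 1 <= q - 1) (leqnn p).
  have : t * q < p * q.
    have h4 : (q - 1) * p < q * p by rewrite ltn_mul2r; apply/andP; split; lia.
    rewrite [p * q]mulnC; lia.
  by move/canc.
split; try lia. right; split => //. move: h2; rewrite addn1. lia.
Qed.

Lemma step n k r : 1 <= k <= n ->
  let p := pp n k in let q := qq n k in
  let ds := dlist n k r in let ds' := dlist n k r.+1 in
  (~~ odd r /\ BO p q (Od ds) (Ed ds)) \/ (odd r /\ BE p q (Od ds) (Ed ds)) ->
  0 < nth 0 ds' r.+1 /\ sumn ds < sumn ds' /\
  ((~~ odd r.+1 /\ BO p q (Od ds') (Ed ds')) \/ (odd r.+1 /\ BE p q (Od ds') (Ed ds')) \/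
   (odd r.+1 /\ Od ds' = p /\ Ed ds' = q - 1) \/ (~~ odd r.+1 /\ Od ds' = p - 1 /\ Ed ds' = q)).
Proof.
move=> hk p q ds ds'.
have [hq hqp hpq] := pq_facts hk.
rewrite -/p -/q in hq hqp hpq.
have hds' : ds' = rcons ds (next_d n k ds) by [].
have hsz : size ds = r.+1 by rewrite size_dlist.
have hnth : nth 0 ds' r.+1 = next_d n k ds by rewrite hds' nth_rcons hsz ltnn eqxx.
have hsum : sumn ds' = sumn ds + next_d n k ds by rewrite hds' sumn_rcons.
have hO : Od ds' = Od ds + (if odd r.+1 then next_d n k ds else 0)
  by rewrite hds' Od_rcons hsz.
have hE : Ed ds' = Ed ds + (if odd r.+1 then 0 else next_d n k ds)
  by rewrite hds' Ed_rcons hsz.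
have hs := sum_dlist n k r; rewrite -/ds in hs.
have hs' := sum_dlist n k r.+1; rewrite -/ds' in hs'.
rewrite hnth hsum.
case=> [[hr hB]|[hr hB]].
- have hnd : next_d n k ds = (((Ed ds + 1) * p) %/ q) - Od ds.
    rewrite next_d_pq hsz /= hr /= -/p -/q.
    have -> : (if r.+1 == 1 then 0 else Od ds) = Od ds.
      case: eqP => // [[e]]; by rewrite /Od big_geq // hsz e.
    have [h1 h2] := div_bounds ((Ed ds + 1) * p) hq.
    have [a1 a2 a3] := arith_step hq hB h1 h2.
    rewrite hs; apply/minn_idPr; lia.
  have [h1 h2] := div_bounds ((Ed ds + 1) * p) hq.
  have [a1 a2 a3] := arith_step hq hB h1 h2.
  rewrite /= hr /= in hO hE *.
  split; first lia. split; first lia.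
  case: a3 => [[e1 e2]|hb].
    right; right; left; split => //; lia.
  right; left; split => //. rewrite hO hE hnd addn0 subnKC //; lia.
- have hnd : next_d n k ds = (((Od ds + 1) * q) %/ p) - Ed ds.
    rewrite next_d_pq hsz /= hr /= -/p -/q.
    have -> : (if r.+1 == 1 then 0 else Ed ds) = Ed ds.
      by case: eqP => // [[e]]; move: hr; rewrite e.
    have hp : 0 < p by lia.
    have [h1 h2] := div_bounds ((Od ds + 1) * q) hp.
    have [a1 a2 a3] := @arith_step q p (Ed ds) (Od ds) _ hp (conj hB.1 hB.2) h1 h2.
    rewrite hs; apply/minn_idPr; lia.
  have hp : 0 < p by lia.
  have [h1 h2] := div_bounds ((Od ds + 1) * q) hp.
  have [a1 a2 a3] := @arith_step q p (Ed ds) (Od ds) _ hp (conj hB.1 hB.2) h1 h2.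
  rewrite /= hr /= in hO hE *.
  split; first lia. split; first lia.
  case: a3 => [[e1 e2]|hb].
    right; right; right; split => //; lia.
  left; split => //. rewrite hO hE hnd addn0 subnKC; last lia.
  by case: hb.
Qed.

Lemma sumcond_recr (P : pred nat) (F : nat -> nat) R :
  \sum_(0 <= i < R.+1 | P i) F i = \sum_(0 <= i < R | P i) F i + (if P R then F R else 0).
Proof. by rewrite big_mkcond big_nat_recr //= -big_mkcond. Qed.

Lemma v_last z ds R n : size ds = R.+1 -> sumn ds = n -> 0 < nth 0 ds R ->
  v_vec z ds n = if z then (if odd R then (Od ds, 0) else (0, Ed ds))
                 else (if odd R then (0, Od ds) else (Ed ds, 0)).
Proof.
move=> hsz hsum hpos.
pose S t := \sum_(0 <= i < t) nth 0 ds i.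
have hSn : S R.+1 = n by rewrite /S -hsz -hsum sumnE [RHS](big_nth 0).
have hSR : S R.+1 = S R + nth 0 ds R by rewrite /S big_nat_recr.
have hmono t u : t <= u -> S t <= S u.
  by move=> htu; rewrite /S (@big_cat_nat _ _ _ t 0 u _ _ (leq0n t) htu) leq_addr.
have hfind : find (fun t => n <= \sum_(0 <= i < t.+1) nth 0 ds i) (iota 0 (size ds)) = R.
  rewrite hsz -addn1 iotaD find_cat.
  have -> : has (fun t => n <= \sum_(0 <= i < t.+1) nth 0 ds i) (iota 0 R) = false.
    apply/negbTE/hasPn => t; rewrite mem_iota add0n => /andP[_ ht].
    rewrite -ltnNge; apply: (leq_ltn_trans (hmono _ _ ht)); lia.
  by rewrite size_iota /= -/(S R.+1) hSn leqnn addn0.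
have hOd : Od ds = \sum_(0 <= i < R.+1 | odd i) nth 0 ds i.
  by rewrite /Od hsz (@big_ltn_cond _ _ _ 0 R.+1 _ _ (ltn0Sn R)).
have hEd : Ed ds = \sum_(0 <= i < R.+1 | ~~ odd i) nth 0 ds i by rewrite /Ed hsz.
rewrite /v_vec hfind -/(S R) hOd hEd !sumcond_recr.
have -> : n - S R = nth 0 ds R by lia.
by case: z; case: (odd R).
Qed.

Definition state n k r :=
  let ds := dlist n k r in
  (~~ odd r /\ BO (pp n k) (qq n k) (Od ds) (Ed ds)) \/
  (odd r /\ BE (pp n k) (qq n k) (Od ds) (Ed ds)).

Definition Fin n k R :=
  let ds := dlist n k R in
  0 < nth 0 ds R /\
  ((odd R /\ Od ds = pp n k /\ Ed ds = qq n k - 1) \/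
   (~~ odd R /\ Od ds = pp n k - 1 /\ Ed ds = qq n k)).

Lemma state_lt n k r : 1 <= k <= n -> state n k r -> sumn (dlist n k r) < n.
Proof.
move=> hk; have [hq hqp hpq] := pq_facts hk.
rewrite sum_dlist /state.
case=> [[_ [h1 h2]]|[_ [h1 h2]]].
- have : (Od (dlist n k r) + 1) * qq n k < (pp n k).+1 * qq n k.
    have h3 : (Ed (dlist n k r) + 1) * pp n k <= qq n k * pp n k := leq_mul (_ : _ <= qq n k) (leqnn _).
    rewrite mulSn [qq n k * _]mulnC in h3 *; lia.
  move/canc; lia.
- have : (Ed (dlist n k r) + 1) * pp n k < (qq n k).+1 * pp n k.
    have h3 : (Od (dlist n k r) + 1) * qq n k <= pp n k * qq n k := leq_mul (_ : _ <= pp n k) (leqnn _).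
    rewrite mulSn [pp n k * _]mulnC in h3 *; lia.
  move/canc; lia.
Qed.

Lemma run n k : 1 <= k <= n -> forall m r, state n k r -> n - sumn (dlist n k r) <= m ->
  (forall r', 1 <= r' < r -> sumn (dlist n k r') < n) ->
  exists R, 1 <= R /\ Fin n k R /\ (forall r', 1 <= r' < R -> sumn (dlist n k r') < n).
Proof.
move=> hk; elim=> [|m IH] r hst hm hpre.
  have := state_lt hk hst; lia.
have hlt := state_lt hk hst.
have [hd [hinc hc]] := step hk hst.
case: hc => [h|[h|[h|h]]].
- apply: (IH r.+1); [by left | lia |].
  move=> r' /andP[h1 h2]; rewrite ltnS leq_eqVlt in h2; case/orP: h2 => [/eqP->//|h2].
  by apply: hpre; lia.
- apply: (IH r.+1); [by right | lia |].
  move=> r' /andP[h1 h2]; rewrite ltnS leq_eqVlt in h2; case/orP: h2 => [/eqP->//|h2].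
  by apply: hpre; lia.
- exists r.+1; split => //; split; first by split => //; left.
  move=> r' /andP[h1 h2]; rewrite ltnS leq_eqVlt in h2; case/orP: h2 => [/eqP->//|h2].
  by apply: hpre; lia.
- exists r.+1; split => //; split; first by split => //; right.
  move=> r' /andP[h1 h2]; rewrite ltnS leq_eqVlt in h2; case/orP: h2 => [/eqP->//|h2].
  by apply: hpre; lia.
Qed.

Theorem proposition3p8 (n k : nat) (hn : 1 <= n) (hk1 : 1 <= k) (hkn : k <= n) :
  exists r : nat, stops_at n k r /\
    (v_vec (eta_z n k) (eta_ds n k r) n = (0, k) \/
     v_vec (eta_z n k) (eta_ds n k r) n = (n - k + 1, 0)).
Proof.
have hk : 1 <= k <= n by rewrite hk1 hkn.
have [hq hqp hpq] := pq_facts hk.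
have h0O : Od (dlist n k 0) = 0 by rewrite /Od /= big_geq.
have h0E : Ed (dlist n k 0) = 0 by rewrite /Ed /= big_mkcond big_nat1.
have hst0 : state n k 0.
  left; split => //; rewrite h0O h0E; split; lia.
have [R [hR [[hpos hfin] hpre]]] := run hk hst0 (leqnn _)
  (fun r' h => ltac:(lia)).
have hsum : sumn (dlist n k R) = n.
  rewrite sum_dlist; case: hfin => [[_ [-> ->]]|[_ [-> ->]]]; lia.
exists R; split.
  split => //; split => // r' hr'; rewrite neq_ltn (hpre r' hr') //.
rewrite /eta_z /eta_ds (v_last _ (size_dlist n k R) hsum hpos).
move: hfin hpq hqp hq; rewrite /pp /qq /eta_z.
case: (zk n k) => [] [[ho [eo ee]]|[/negbTE ho [eo ee]]] hpq hqp hq; rewrite ho /= ?eo ?ee.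
- right; congr pair; lia.
- left; congr pair; lia.
- left; congr pair; lia.
- right; congr pair; lia.
Qed.
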